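(* Let $k\ge2$ be an integer and $\mathcal{M}=\{k\}\subseteq\mathbb{N}_0$. Then: (1) $\mathcal{M}^1=\{x\in\mathbb{N}_0:\ x\bmod 2k\in\{k,k+1,\dots,2k-1\}\}$; (2) $\mathcal{M}^2=\{k,\dots,2k-1\}\cup\{2jk-1:\ j\ge2\}$; (3) $\mathcal{M}^3=\{k,\dots,2k-1\}\cup\{4k-1,\dots,5k-2\}\cup\{(2j+1)k-2:\ j\ge3\}$; (4) $\mathcal{M}^4=\mathcal{M}_k\cap\{0,1,\dots,10k-3\}$; (5) $\mathcal{M}^5=\mathcal{M}_k$, where $\mathcal{M}_k=\{ip_k+j:\ i\in\mathbb{N}_0,\ k\le j\le 2k-1\}$ with $p_k=3k-1$.
   Context: A one-heap game is a set $\mathcal{M}\subseteq\mathbb{N}_0$ of moves; from position $x\in\mathbb{N}_0$ one may move to $y\in\mathbb{N}_0$ iff $x-y\in\mathcal{M}$. Misère play: a player who cannot move wins. If $0\in\mathcal{M}$, $P(\mathcal{M})=\varnothing$. Otherwise: a position is an N-position if it has no option or some option is a P-position; otherwise it is a P-position; $P(\mathcal{M})$ denotes the set of P-positions. $\mathcal{M}^\star=P(\mathcal{M})$, $\mathcal{M}^0=\mathcal{M}$, $\mathcal{M}^i=(\mathcal{M}^{i-1})^\star$. *)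

(* Defs.v *)
From mathcomp Require Import all_boot.
Set Implicit Arguments. Unset Strict Implicit. Unset Printing Implicit Defensive.

(* A one-heap game: a move set M, given as a boolean predicate on nat.
   From x one may move to y iff y <= x and x - y \in M. *)

(* Status of position x given the table [tab] of P-statuses of 0..x-1
   (valid when 0 \notin M, so every option y satisfies y < x).
   x is a P-position iff it has some option and no option is a P-position. *)
Definition newP (M : pred nat) (tab : seq bool) (x : nat) : bool :=
  has (fun y => M (x - y)) (iota 0 x) &&
  ~~ has (fun y => M (x - y) && nth false tab y) (iota 0 x).

Fixpoint Ptab (M : pred nat) (n : nat) : seq bool :=
  match n with
  | 0 => [::]
  | n'.+1 => let t := Ptab M n' in rcons t (newP M t n')
  end.

(* P(M): the set of P-positions; empty if 0 \in M. *)
Definition Pset (M : pred nat) : pred nat :=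
  fun x => ~~ M 0 && nth false (Ptab M x.+1) x.

Definition Miter (M : pred nat) (i : nat) : pred nat := iter i Pset M.

Definition Mk (k x : nat) : Prop :=
  exists i j, k <= j <= 2 * k - 1 /\ x = i * (3 * k - 1) + j.

(* Main.v *)
Require Import Defs.
From mathcomp Require Import all_boot.
From mathcomp Require Import zify.
From Stdlib Require Import Classical.

Lemma size_Ptab M n : size (Ptab M n) = n.
Proof. by elim: n => //= n IH; rewrite size_rcons IH. Qed.

Lemma nth_Ptab M n y : y < n -> nth false (Ptab M n) y = nth false (Ptab M y.+1) y.
Proof.
elim: n => // n IH hy.
case: (ltnP y n) => h; last by have -> : y = n by lia.
by rewrite /= nth_rcons size_Ptab h IH.
Qed.

Lemma Pset_eq M x : ~~ M 0 -> Pset M x =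
  has (fun y => M (x-y)) (iota 0 x) && ~~ has (fun y => M (x-y) && Pset M y) (iota 0 x).
Proof.
move=> M0; rewrite /Pset M0 /= nth_rcons size_Ptab ltnn eqxx /newP.
congr (_ && ~~ _); apply: eq_in_has => y; rewrite mem_iota => /andP [_ hy] /=.
by rewrite nth_Ptab.
Qed.

Lemma Pset_char (M : pred nat) (Q : nat -> Prop) : ~~ M 0 ->
  (forall x, Q x <-> (exists m, M m /\ m <= x) /\ (forall m y, M m -> m + y = x -> ~ Q y)) ->
  forall x, Pset M x <-> Q x.
Proof.
move=> M0 HQ; elim/ltn_ind => x IH; rewrite Pset_eq // HQ; split.
- case/andP => /hasP [y hy My] /hasPn Hn; rewrite mem_iota in hy; split.
    by exists (x - y); split => //; apply: leq_subr.
  move=> m z Mm hmz Qz.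
  have m0 : 0 < m by case: m Mm hmz => //; rewrite (negbTE M0).
  have := Hn z; rewrite mem_iota; have -> : x - z = m by lia.
  have Pz : Pset M z by apply/(IH z); first lia.
  rewrite Mm Pz /=; move=> /(_ _)/negP; apply; lia.
- case => [[m [Mm mx]] H]; apply/andP; split.
    have m0 : 0 < m by case: m Mm mx => //; rewrite (negbTE M0).
    apply/hasP; exists (x - m); first by rewrite mem_iota; lia.
    by rewrite subKn.
  apply/hasPn => y; rewrite mem_iota => /andP [_ hy]; apply/negP => /andP [My Py].
  apply: (H (x - y) y My); first by lia.
  by apply/(IH y).
Qed.

Lemma modr c d t : c*d <= t -> t < c.+1*d -> t %% d + c*d = t.
Proof. move=> h1 h2; rewrite -{1}(subnKC h1) modnMDl modn_small; lia. Qed.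

Lemma modadd d a b x : 0 < d -> a + b = x ->
  x %% d = a %% d + b %% d \/ x %% d + d = a %% d + b %% d.
Proof.
move=> d0 <-; rewrite modnD //.
have := ltn_pmod a d0; have := ltn_pmod b d0.
case: leqP => h /= ?; lia.
Qed.


Ltac mfr d t c hi := let h := fresh "f" in have h := modr c d t;
  tryif constr_eq c hi then idtac else mfr d t (S c) hi.
Ltac mf d hd t lo hi := let h := fresh "f" in have h := ltn_pmod t hd; mfr d t lo hi.
Ltac mf0 d hd t := let h := fresh "f" in let h2 := fresh "f" in have h := ltn_pmod t hd; have h2 := leq_mod t d.
Ltac gen d t := let r := fresh "r" in set (r := t %% d) in *; clearbody r.

Definition Q1 k x := k <= x %% (2*k).
Definition Q3 k x := (k <= x /\ x < 2*k) \/ (4*k <= x + 1 /\ x + 2 <= 5*k) \/ (x %% (2*k) + 2 = k /\ 7*k <= x + 2).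
Definition Q4 k x := (k <= x /\ x < 2*k) \/ (4*k <= x + 1 /\ x + 2 <= 5*k) \/ (7*k <= x + 2 /\ x + 3 <= 8*k) \/ x + 3 = 10*k.
Definition Q5 k x := k <= x %% (3*k-1) /\ x %% (3*k-1) < 2*k.
Definition Q2 k x := (k <= x /\ x < 2*k) \/ (x %% (2*k) + 1 = 2*k /\ 4*k <= x + 1).

Lemma step1 k (hk : 2 <= k) x : Pset (pred1 k) x <-> Q1 k x.
Proof.
have hd : 0 < 2 * k by lia.
apply: (@Pset_char _ (Q1 k)) => [|{}x]; first by rewrite /= eq_sym; case: k hk hd.
rewrite /Q1; split.
- move=> h; split; first by exists k; split; [exact: eqxx | have := leq_mod x (2*k); lia].
  move=> m y /eqP -> hy Qy.
  have hm := @modadd (2*k) _ _ _ hd hy. mf0 (2*k) hd x. mf0 (2*k) hd y. have hk2 : k %% (2*k) = k by rewrite modn_small; lia.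
  gen (2*k) x; gen (2*k) y; gen (2*k) k. lia.
- case => [[m [/eqP -> mx]] H]; apply: NNPP => nQ.
  set y := x - k; have hy : k + y = x by lia. clearbody y.
  apply: (H k y (eqxx k) hy).
  have hm := @modadd (2*k) _ _ _ hd hy. mf0 (2*k) hd x. mf0 (2*k) hd y. have hk2 : k %% (2*k) = k by rewrite modn_small; lia.
  gen (2*k) x; gen (2*k) y; gen (2*k) k. lia.
Qed.

Lemma Pset_char' (M : pred nat) (QM Q : nat -> Prop) : (forall x, M x <-> QM x) -> ~ QM 0 ->
  (forall x, Q x <-> (exists m, QM m /\ m <= x) /\ (forall m y, QM m -> m + y = x -> ~ Q y)) ->
  forall x, Pset M x <-> Q x.
Proof.
move=> HM QM0 HQ; apply: Pset_char; first by apply/negP => /HM.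
move=> x; rewrite HQ; split.
- case=> [[m [/HM ? ?]] H]; split; first by exists m.
  by move=> m' y /HM; apply: H.
- case=> [[m [/HM ? ?]] H]; split; first by exists m.
  by move=> m' y /HM; apply: H.
Qed.

Ltac wit x y m e :=
  have e : y <= x; [lia|]; set (m := x - y); have {e} e : m + y = x; [by rewrite subnK|]; clearbody m.

Lemma step2 k (hk : 2 <= k) x : Pset (Pset (pred1 k)) x <-> Q2 k x.
Proof.
have hd : 0 < 2 * k by lia.
have hk2 : k %% (2*k) = k by rewrite modn_small; lia.
apply: (@Pset_char' _ (Q1 k)) => [{}x|{}x|{}x]; first exact: step1.
  by move: x; rewrite /Q1 mod0n; lia.
rewrite /Q1 /Q2; split.
- move=> h; split; first by exists k; split; lia.
  move=> m y Qm hy Qy.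
  have hm := @modadd (2*k) _ _ _ hd hy. mf0 (2*k) hd x. mf0 (2*k) hd y. mf0 (2*k) hd m.
  have := modr 0 (2*k) y.
  gen (2*k) x; gen (2*k) y; gen (2*k) m. lia.
- case => [[m [Qm mx]] H]; apply: NNPP => nQ.
  have := leq_mod m (2*k); have := modr 1 (2*k) x => h1 h2.
  case: (ltnP (x %% (2*k)) k) => h3.
    wit x (k + x %% (2*k)) m0 e.
    apply: (H m0 (k + x %% (2*k)) _ e); last by lia.
    have hm := @modadd (2*k) _ _ _ hd e. mf0 (2*k) hd x. mf0 (2*k) hd m0.
    have := modr 0 (2*k) (k + x %% (2*k)).
    gen (2*k) x; gen (2*k) m0; gen (2*k) m. lia.
  wit x (2*k - 1) m0 e.
  apply: (H m0 (2*k-1) _ e); last by lia.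
  have hm := @modadd (2*k) _ _ _ hd e. mf0 (2*k) hd x. mf0 (2*k) hd m0.
  have := modr 0 (2*k) (2*k-1).
  gen (2*k) x; gen (2*k) m0; gen (2*k) m. lia.
Qed.

Ltac fin d hd x m y e := let hm := fresh "hm" in
  have hm := @modadd d _ _ _ hd e; mf0 d hd x; mf0 d hd m; mf0 d hd y.

Lemma step3 k (hk : 2 <= k) x : Pset (Pset (Pset (pred1 k))) x <-> Q3 k x.
Proof.
have hd : 0 < 2 * k by lia.
have hk2 : k %% (2*k) = k by rewrite modn_small; lia.
apply: (@Pset_char' _ (Q2 k)) => [{}x|{}x|{}x]; first exact: step2.
  by move: x; rewrite /Q2 mod0n; lia.
rewrite /Q2 /Q3; split.
- move=> h; split; first by exists k; split; lia.
  move=> m y Qm hy Qy.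
  fin (2*k) hd x m y hy.
  have := modr 0 (2*k) m; have := modr 0 (2*k) y; have := modr 1 (2*k) y; have := modr 2 (2*k) y.
  gen (2*k) x; gen (2*k) y; gen (2*k) m. lia.
- case => [[m [Qm mx]] H]; apply: NNPP => nQ.
  have hxk : k <= x by have := leq_mod m (2*k); lia.
  clear Qm mx m.
  case: (leqP (x + 1) (3*k)) => h1.
    wit x k m e; apply: (H m k _ e); last by lia.
    lia.
  case: (leqP (x + 2) (4*k)) => h2.
    wit x (2*k-1) m e; apply: (H m (2*k-1) _ e); last by lia.
    lia.
  case: (leqP (x + 2) (6*k)) => h3.
    wit x (4*k-1) m e; apply: (H m (4*k-1) _ e); last by lia.
    lia.
  case: (leqP (x + 3) (7*k)) => h4.
    wit x (x - (2*k-1)) m e; apply: (H m (x - (2*k-1)) _ e); last by lia.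
    lia.
  have := modr 3 (2*k) x; have := modr 4 (2*k) x => h5 h6.
  case: (leqP (x %% (2*k) + 2) k) => h7.
    case: (leqP (x %% (2*k) + 3) k) => h8.
      wit x (4*k + x %% (2*k) + 1) m e; apply: (H m (4*k + x %% (2*k) + 1) _ e); last by lia.
      fin (2*k) hd x m (4*k + x %% (2*k) + 1) e.
      have := modr 2 (2*k) (4*k + x %% (2*k) + 1).
      gen (2*k) (4*k + x %% (2*k) + 1); gen (2*k) x; gen (2*k) m. lia.
    exfalso; apply: nQ; lia.
  case: (leqP (x %% (2*k) + 2) (2*k)) => h8.
    wit x (x %% (2*k) + 1) m e; apply: (H m (x %% (2*k) + 1) _ e); last by lia.
    fin (2*k) hd x m (x %% (2*k) + 1) e.
    have := modr 0 (2*k) (x %% (2*k) + 1).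
    gen (2*k) (x %% (2*k) + 1); gen (2*k) x; gen (2*k) m. lia.
  wit x (4*k) m e; apply: (H m (4*k) _ e); last by lia.
  fin (2*k) hd x m (4*k) e.
  have := modr 2 (2*k) (4*k).
  gen (2*k) (4*k); gen (2*k) x; gen (2*k) m. lia.
Qed.


Lemma step4 k (hk : 2 <= k) x : Pset (Pset (Pset (Pset (pred1 k)))) x <-> Q4 k x.
Proof.
have hd : 0 < 2 * k by lia.
have hk2 : k %% (2*k) = k by rewrite modn_small; lia.
apply: (@Pset_char' _ (Q3 k)) => [{}x|{}x|{}x]; first exact: step3.
  by move: x; rewrite /Q3 mod0n; lia.
rewrite /Q3 /Q4; split.
- move=> h; split; first by exists k; split; lia.
  move=> m y Qm hy Qy.
  have := modr 3 (2*k) m; have := modr 4 (2*k) m.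
  gen (2*k) m.
  case: h => [h|[h|[h|h]]]; case: Qm => [q|[q|q]]; lia.
- case => [[m [Qm mx]] H]; apply: NNPP => nQ.
  have hxk : k <= x by have := leq_mod m (2*k); lia.
  clear Qm mx m.
  case: (leqP (x + 1) (3*k)) => h1.
    wit x k m e; apply: (H m k _ e); clear H; last by lia.
    lia.
  case: (leqP (x + 2) (4*k)) => h2.
    wit x (2*k-1) m e; apply: (H m (2*k-1) _ e); clear H; last by lia.
    lia.
  case: (leqP (x + 2) (6*k)) => h3.
    wit x (4*k-1) m e; apply: (H m (4*k-1) _ e); clear H; last by lia.
    lia.
  case: (leqP (x + 3) (7*k)) => h4.
    wit x (x - (2*k-1)) m e; apply: (H m (x - (2*k-1)) _ e); clear H; last by lia.
    lia.
  case: (leqP (x + 3) (9*k)) => h5.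
    wit x (7*k-2) m e; apply: (H m (7*k-2) _ e); clear H; last by lia.
    lia.
  case: (leqP (x + 4) (10*k)) => h6.
    wit x (x - (2*k-1)) m e; apply: (H m (x - (2*k-1)) _ e); clear H; last by lia.
    lia.
  have h7 : 10 * k <= x + 2 by lia.
  have := modr 4 (2*k) x; have := modr 5 (2*k) x; have := modr 6 (2*k) x => f4 f5 f6.
  case: (leqP (2*k) (x %% (2*k) + 2)) => h8.
    wit x (x %% (2*k) + 2 - k) m e; apply: (H m (x %% (2*k) + 2 - k) _ e); clear H.
      fin (2*k) hd x m (x %% (2*k) + 2 - k) e.
      have := modr 0 (2*k) (x %% (2*k) + 2 - k).
      gen (2*k) (x %% (2*k) + 2 - k); gen (2*k) x; gen (2*k) m. lia.
    have := ltn_pmod x hd; lia.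
  case: (leqP (x %% (2*k) + 3) k) => h9.
    wit x (x %% (2*k) + k + 2) m e; apply: (H m (x %% (2*k) + k + 2) _ e); clear H; last by lia.
    fin (2*k) hd x m (x %% (2*k) + k + 2) e.
    have := modr 0 (2*k) (x %% (2*k) + k + 2).
    gen (2*k) (x %% (2*k) + k + 2); gen (2*k) x; gen (2*k) m. lia.
  case: (leqP (x %% (2*k) + 4) (2 * k)) => h10.
    wit x (3*k + x %% (2*k) + 2) m e; apply: (H m (3*k + x %% (2*k) + 2) _ e); clear H; last by lia.
    fin (2*k) hd x m (3*k + x %% (2*k) + 2) e.
    have := modr 2 (2*k) (3*k + x %% (2*k) + 2).
    gen (2*k) (3*k + x %% (2*k) + 2); gen (2*k) x; gen (2*k) m. lia.
  have h11 : x %% (2*k) + 3 = 2 * k by lia.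
  case: (leqP (x + 3) (12*k)) => h12.
    wit x (8*k-3) m e; apply: (H m (8*k-3) _ e); clear H; last by lia.
    lia.
  wit x (7*k-1) m e; apply: (H m (7*k-1) _ e); clear H; last by lia.
  fin (2*k) hd x m (7*k-1) e.
  have := modr 3 (2*k) (7*k-1).
  gen (2*k) (7*k-1); gen (2*k) x; gen (2*k) m. lia.
Qed.


Lemma step5 k (hk : 2 <= k) x : Pset (Pset (Pset (Pset (Pset (pred1 k))))) x <-> Q5 k x.
Proof.
apply: (@Pset_char' _ (Q4 k)) => [{}x|{}x|{}x]; first exact: step4.
  by move: x; rewrite /Q4; lia.
rewrite /Q4 /Q5.
have hp : (3*k-1) + 1 = 3*k by lia.
have hd : 0 < 3*k-1 by lia.
move: (3*k-1) hp hd => p hp hd.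
split.
- move=> h; split; first by exists k; split; [lia | have := leq_mod x p; lia].
  move=> m y Qm hy Qy.
  have hm := @modadd p _ _ _ hd hy. mf0 p hd x. mf0 p hd y. mf0 p hd m.
  have := modr 0 p m; have := modr 1 p m; have := modr 2 p m; have := modr 3 p m.
  gen p x; gen p y; gen p m.
  case: Qm => [q|[q|[q|q]]]; lia.
- case => [[m [Qm mx]] H]; apply: NNPP => nQ.
  have hxk : k <= x by lia.
  clear Qm mx m.
  case: (leqP (2*k) (x %% p)) => h1.
    have e : k + (x - k) = x by lia.
    apply: (H k (x-k) _ e); first by lia.
    move: (x - k) e => y e.
    have hm := @modadd p _ _ _ hd e. mf0 p hd x. mf0 p hd y.
    have := modr 0 p k.
    gen p x; gen p y; gen p k. lia.
  case: (leqP k (x %% p)) => h2; first by apply: nQ; lia.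
  have := modr 0 p x => h3.
  have e : (2*k-1) + (x - (2*k-1)) = x by lia.
  apply: (H (2*k-1) (x-(2*k-1)) _ e); first by lia.
  move: (x - (2*k-1)) e => y e.
  have hm := @modadd p _ _ _ hd e. mf0 p hd x. mf0 p hd y.
  have := modr 0 p (2*k-1).
  gen p x; gen p y; gen p (2*k-1). lia.
Qed.


Lemma conv1 k (hk : 2 <= k) x : Q1 k x <-> k <= x %% (2 * k) <= 2 * k - 1.
Proof. rewrite /Q1; have := @ltn_pmod x (2*k) ltac:(lia); lia. Qed.

Lemma conv2 k (hk : 2 <= k) x : Q2 k x <->
  (k <= x <= 2 * k - 1) \/ (exists j, 2 <= j /\ x = 2 * j * k - 1).
Proof.
rewrite /Q2; split.
- case => [h|[h1 h2]]; [left; lia|right].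
  have dv := divn_eq x (2*k).
  move: (x %/ (2*k)) dv => q dv.
  case: q dv => [|q] dv; first lia.
  exists q.+2; split => //; lia.
- case => [h|[j [hj ->]]]; [left; lia|right].
  case: j hj => [|[|j]] hj //.
  have -> : 2 * j.+2 * k - 1 = j.+1 * (2*k) + (2*k-1) by lia.
  rewrite modnMDl modn_small; lia.
Qed.

Lemma conv3 k (hk : 2 <= k) x : Q3 k x <->
     (k <= x <= 2 * k - 1) \/ (4 * k - 1 <= x <= 5 * k - 2) \/
     (exists j, 3 <= j /\ x = (2 * j + 1) * k - 2).
Proof.
rewrite /Q3; split.
- case => [h|[h|[h1 h2]]]; [left; lia|right; left; lia|right; right].
  have dv := divn_eq x (2*k).
  move: (x %/ (2*k)) dv => q dv.
  case: q dv => [|[|[|q]]] dv; try lia.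
  exists q.+3; split => //; lia.
- case => [h|[h|[j [hj ->]]]]; [left; lia|right; left; lia|right; right].
  case: j hj => [|[|[|j]]] hj //.
  have -> : (2 * j.+3 + 1) * k - 2 = j.+3 * (2*k) + (k-2) by lia.
  rewrite modnMDl modn_small; lia.
Qed.

Lemma conv4 k (hk : 2 <= k) x : Q4 k x <-> Mk k x /\ x <= 10 * k - 3.
Proof.
rewrite /Q4 /Mk; split.
- case => [h|[h|[h|h]]]; (split; [|lia]).
  + by exists 0, x; split; lia.
  + by exists 1, (x - (3*k-1)); split; lia.
  + by exists 2, (x - 2*(3*k-1)); split; lia.
  + by exists 3, k; split; lia.
- case => [[i [j [hj ->]]] hx].
  have hp : (3*k-1) + 1 = 3*k by lia.
  move: (3*k-1) hp hx => p hp hx.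
  case: i hx => [|[|[|[|i]]]] hx; lia.
Qed.

Lemma conv5 k (hk : 2 <= k) x : Q5 k x <-> Mk k x.
Proof.
rewrite /Q5 /Mk.
have hp : (3*k-1) + 1 = 3*k by lia.
have hd : 0 < 3*k-1 by lia.
move: (3*k-1) hp hd => p hp hd.
split.
- move=> h; exists (x %/ p), (x %% p); split; first lia.
  exact: divn_eq.
- case => [i [j [hj ->]]].
  rewrite modnMDl modn_small; lia.
Qed.

Theorem lemma9 (k : nat) (hk : 2 <= k) :
  let M := pred1 k in
  (forall x, Miter M 1 x <-> k <= x %% (2 * k) <= 2 * k - 1) /\
  (forall x, Miter M 2 x <->
     (k <= x <= 2 * k - 1) \/ (exists j, 2 <= j /\ x = 2 * j * k - 1)) /\
  (forall x, Miter M 3 x <->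
     (k <= x <= 2 * k - 1) \/ (4 * k - 1 <= x <= 5 * k - 2) \/
     (exists j, 3 <= j /\ x = (2 * j + 1) * k - 2)) /\
  (forall x, Miter M 4 x <-> Mk k x /\ x <= 10 * k - 3) /\
  (forall x, Miter M 5 x <-> Mk k x).
Proof.
move=> M; rewrite /M /Miter /=.
split; [|split; [|split; [|split]]] => x.
- exact (iff_trans (step1 k hk x) (conv1 k hk x)).
- exact (iff_trans (step2 k hk x) (conv2 k hk x)).
- exact (iff_trans (step3 k hk x) (conv3 k hk x)).
- exact (iff_trans (step4 k hk x) (conv4 k hk x)).
- exact (iff_trans (step5 k hk x) (conv5 k hk x)).
Qed.
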